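(* Let $a<b$ and $\ell_3>0$, and let $U(y,z)$ be a smooth real-valued function on $[a,b]\times\mathbb{R}$, $\ell_3$-periodic in $z$, satisfying $U_y=0$ at $y=a$ and at $y=b$. Let $A=\max_{y,z}|\nabla U|$ and $B=\max_{y,z}|\Delta U|$. Suppose $k\neq 0$ is real, $c=c_r+ic_i$ is complex with $c_i>0$, and there are smooth functions $u,v,w,p$ on $[a,b]\times\mathbb{R}$, $\ell_3$-periodic in $z$, not all identically zero, such that \[ ik(U-c)u+vU_y+wU_z=-ikp,\quad ik(U-c)v=-p_y,\quad ik(U-c)w=-p_z,\quad iku+v_y+w_z=0, \] with $v(a,z)=v(b,z)=0$ for all $z$. Then \[ (kc_i)^2\le 2A^2+Bc_i, \] equivalently $\left(kc_i-\frac{B}{2k}\right)^2\le 2A^2+\left(\frac{B}{2k}\right)^2$.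
   Context: Here $\nabla=(\partial_y,\partial_z)$ and $\Delta=\partial_y^2+\partial_z^2$. The system is the linearization of the 3D Euler equations in the channel $a\le y\le b$ (slip boundary condition, periodic in $x$ and $z$) about the steady shear $(U(y,z),0,0)$ with constant pressure, for perturbations of the form $e^{ik(x-ct)}(u,v,w,p)(y,z)+\text{c.c.}$; such $c$ is called an unstable eigenvalue with wave number $k$. *)

(* Defs.v *)
From Stdlib Require Import Reals.
From Coquelicot Require Import Coquelicot.
Open Scope R_scope.

Definition cont2 {V : NormedModule R_AbsRing} (f : R -> R -> V) : Prop :=
  forall y z : R,
    filterlim (fun q : R * R => f (fst q) (snd q)) (locally (y, z)) (locally (f y z)).

Fixpoint Ck {V : NormedModule R_AbsRing} (n : nat) (f : R -> R -> V) : Prop :=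
  cont2 f /\
  match n with
  | O => True
  | S m => exists fy fz : R -> R -> V,
      (forall y z, is_derive (fun t => f t z) y (fy y z)) /\
      (forall y z, is_derive (fun t => f y t) z (fz y z)) /\
      Ck m fy /\ Ck m fz
  end.

Definition smooth2 {V : NormedModule R_AbsRing} (f : R -> R -> V) : Prop :=
  forall n, Ck n f.

Definition dy (f : R -> R -> R) (y z : R) : R := Derive (fun t => f t z) y.
Definition dz (f : R -> R -> R) (y z : R) : R := Derive (fun t => f y t) z.
Definition lap (f : R -> R -> R) (y z : R) : R := dy (dy f) y z + dz (dz f) y z.

Definition dyC (f : R -> R -> C) (y z : R) : C :=
  (Derive (fun t => Re (f t z)) y, Derive (fun t => Im (f t z)) y).
Definition dzC (f : R -> R -> C) (y z : R) : C :=
  (Derive (fun t => Re (f y t)) z, Derive (fun t => Im (f y t)) z).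

Definition zperiodic {T : Type} (a b l : R) (f : R -> R -> T) : Prop :=
  forall y z, a <= y <= b -> f y (z + l) = f y z.

Definition is_max_strip (a b : R) (F : R -> R -> R) (M : R) : Prop :=
  (forall y z, a <= y <= b -> F y z <= M) /\
  (exists y z, a <= y <= b /\ F y z = M).

(* Main.v *)
Require Import Defs.
From Stdlib Require Import Reals Lra Psatz.
From Coquelicot Require Import Coquelicot.
Open Scope R_scope.

Definition CT (f : R -> R -> R) := forall x y, continuity_2d_pt f x y.

Lemma cont2_CT (f : R -> R -> R) : cont2 f -> CT f.
Proof. intros H x y. apply continuity_2d_pt_filterlim. apply H. Qed.

Lemma cont2C_re (f : R -> R -> C) : cont2 f -> CT (fun y z => fst (f y z)).
Proof.
  intros H x y. apply continuity_2d_pt_filterlim.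
  eapply filterlim_comp. apply (H x y).
  destruct (f x y) as [r i]. apply continuous_fst.
Qed.

Lemma cont2C_im (f : R -> R -> C) : cont2 f -> CT (fun y z => snd (f y z)).
Proof.
  intros H x y. apply continuity_2d_pt_filterlim.
  eapply filterlim_comp. apply (H x y).
  destruct (f x y) as [r i]. apply continuous_snd.
Qed.

Lemma CT_swap f : CT f -> CT (fun u v => f v u).
Proof.
  intros H x y eps. destruct (H y x eps) as [d Hd]. exists d.
  intros u v Hu Hv. apply Hd; auto.
Qed.

Lemma CT_cont1 f z y : CT f -> continuous (fun t => f t z) y.
Proof.
  intros H. apply filterlim_locally.
  intros eps. destruct (H y z eps) as [d Hd].
  exists d. intros t Ht. apply Hd. exact Ht. rewrite Rminus_eq_0, Rabs_R0. apply cond_pos.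
Qed.

Lemma is_derive_fstC (g : R -> C) x l :
  is_derive g x l -> is_derive (fun t => fst (g t)) x (fst l).
Proof.
  intros H. unfold is_derive in *.
  apply (filterdiff_ext_lin _ (fun y : R => fst (scal y l))).
  apply (filterdiff_comp' g fst x (fun y => scal y l) fst). exact H.
  apply filterdiff_linear. apply is_linear_fst.
  intros h. simpl. reflexivity.
Qed.

Lemma is_derive_sndC (g : R -> C) x l :
  is_derive g x l -> is_derive (fun t => snd (g t)) x (snd l).
Proof.
  intros H. unfold is_derive in *.
  apply (filterdiff_ext_lin _ (fun y : R => snd (scal y l))).
  apply (filterdiff_comp' g snd x (fun y => scal y l) snd). exact H.
  apply filterdiff_linear. apply is_linear_snd.
  intros h. simpl. reflexivity.
Qed.

Lemma RInt_pos_pt (g : R->R) a b y0 : a < b -> a<=y0<=b ->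
  (forall y, continuous g y) -> (forall y, a<=y<=b -> 0 <= g y) -> 0 < g y0 ->
  0 < RInt g a b.
Proof.
  intros Hab Hy0 Hc Hnn Hp.
  assert (Hg2 : 0 < g y0 / 2) by lra.
  destruct (proj1 (filterlim_locally g (g y0)) (Hc y0) (mkposreal _ Hg2)) as [d Hd].
  set (c := Rmax a (y0 - d/2)). set (e := Rmin b (y0 + d/2)).
  assert (Hd0 := cond_pos d).
  assert (Hac : a <= c) by apply Rmax_l.
  assert (Heb : e <= b) by apply Rmin_l.
  assert (Hce : c < e).
  { unfold c, e. apply Rmax_case; apply Rmin_case; lra. }
  assert (Hex : forall x y, ex_RInt g x y).
  { intros x y. apply (@ex_RInt_continuous R_CompleteNormedModule). intros; apply Hc. }
  rewrite <- (RInt_Chasles g a c b) by auto.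
  rewrite <- (RInt_Chasles g c e b) by auto.
  assert (H1 : 0 <= RInt g a c).
  { apply RInt_ge_0; auto. intros x Hx. apply Hnn. unfold c in *.
    split; [lra|]. revert Hx. apply Rmax_case; lra. }
  assert (H3 : 0 <= RInt g e b).
  { apply RInt_ge_0; auto. intros x Hx. apply Hnn. unfold e in *.
    split; [|lra]. revert Hx. apply Rmin_case; lra. }
  assert (H2 : 0 < RInt g c e).
  { apply RInt_gt_0; auto. intros x Hx.
    assert (Hb : ball y0 d x).
    { assert (y0 - d/2 <= c) by apply Rmax_r. assert (e <= y0 + d/2) by apply Rmin_r.
      change (Rabs (x - y0) < d). apply Rabs_def1; lra. }
    specialize (Hd x Hb). change (Rabs (g x - g y0) < g y0 / 2) in Hd.
    apply Rabs_def2 in Hd. lra. }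
  change (0 < RInt g a c + (RInt g c e + RInt g e b)). lra.
Qed.

Lemma dec_fun (f d : R -> R) : (forall z, is_derive f z (d z)) -> (forall z, d z <= 0) ->
  forall x y, x <= y -> f y <= f x.
Proof.
  intros Hd Hn x y Hxy.
  destruct (MVT_gen f x y d) as [c [_ Hc]].
  - intros; apply Hd.
  - intros z _. apply continuity_pt_filterlim. apply (@ex_derive_continuous R_AbsRing R_NormedModule).
    eexists; apply Hd.
  - specialize (Hn c). nra.
Qed.

Lemma exR (f: R->R->R) a b z : CT f -> ex_RInt (fun y => f y z) a b.
Proof.
  intros H. apply (@ex_RInt_continuous R_CompleteNormedModule). intros; apply CT_cont1; auto.
Qed.

Lemma core (a b l : R) (F Fy G Gz Q : R->R->R) (K : R):
 a < b -> 0 < l -> CT Fy -> CT G -> CT Gz -> CT Q ->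
 (forall y z, is_derive (fun t => F t z) y (Fy y z)) ->
 (forall y z, is_derive (fun t => G y t) z (Gz y z)) ->
 (forall z, F a z = 0) -> (forall z, F b z = 0) ->
 (forall y z, a <= y <= b -> G y (z + l) = G y z) ->
 (forall y z, a <= y <= b -> Fy y z + Gz y z <= - K * Q y z) ->
 (forall y z, a <= y <= b -> 0 <= Q y z) ->
 (exists y0 z0, a <= y0 <= b /\ 0 < Q y0 z0) ->
 K <= 0.
Proof.
  intros Hab Hl cFy cG cGz cQ HFd HGd HFa HFb Hper Hpt HQ [y0 [z0 [Hy0 HQ0]]].
  destruct (Rle_or_lt K 0) as [|HK]; [auto|exfalso].
  set (phi := fun z => RInt (fun y => G y z) a b).
  set (dphi := fun z => RInt (fun y => Gz y z) a b).
  assert (Hmin : Rmin a b = a) by (apply Rmin_left; lra).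
  assert (Hmax : Rmax a b = b) by (apply Rmax_right; lra).
  assert (Hder : forall z, is_derive phi z (dphi z)).
  { intros z. pose proof (is_derive_RInt_param (fun z y => G y z) a b z) as P.
    unfold phi, dphi.
    replace (RInt (fun y => Gz y z) a b)
      with (RInt (fun t : R => Derive (fun u : R => G t u) z) a b).
    apply P.
    - apply filter_forall. intros x t _. eexists; apply HGd.
    - intros t _. apply continuity_2d_pt_ext with (fun u v => Gz v u).
      intros; symmetry; apply is_derive_unique; apply HGd. apply CT_swap; auto.
    - apply filter_forall. intros x. apply exR; auto.
    - apply RInt_ext. intros; apply is_derive_unique; apply HGd. }
  assert (HFint : forall z, RInt (fun y => Fy y z) a b = 0).
  { intros z. apply is_RInt_unique.
    replace 0 with (minus (F b z) (F a z)).
    apply (is_RInt_derive (fun t => F t z) (fun t => Fy t z)).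
    intros; apply HFd. intros; apply CT_cont1; auto.
    rewrite HFa, HFb. compute; ring. }
  assert (HQint : forall z, 0 <= RInt (fun y => Q y z) a b).
  { intros z. apply RInt_ge_0; [lra| apply exR; auto|]. intros; apply HQ; lra. }
  assert (Hdle : forall z, dphi z <= - K * RInt (fun y => Q y z) a b).
  { intros z. unfold dphi. rewrite <- (Rplus_0_l (RInt _ a b)), <- (HFint z).
    assert (E1 : RInt (fun y => Fy y z) a b + RInt (fun y => Gz y z) a b
                 = RInt (fun y => Fy y z + Gz y z) a b).
    { symmetry. apply (RInt_plus (V:=R_CompleteNormedModule)); apply exR; auto. }
    assert (E2 : - K * RInt (fun y => Q y z) a b = RInt (fun y => - K * Q y z) a b).
    { symmetry. apply (RInt_scal (V:=R_CompleteNormedModule)); apply exR; auto. }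
    rewrite E1, E2. apply RInt_le. lra.
    apply (@ex_RInt_continuous R_CompleteNormedModule). intros.
    apply (continuous_plus (fun y => Fy y z) (fun y => Gz y z)); apply CT_cont1; auto.
    apply (@ex_RInt_continuous R_CompleteNormedModule). intros.
    apply (continuous_scal_r (-K) (fun y => Q y z)); apply CT_cont1; auto.
    intros; apply Hpt; lra. }
  assert (Hdn : forall z, dphi z <= 0).
  { intros z. specialize (Hdle z). specialize (HQint z). nra. }
  assert (Hd0 : dphi z0 < 0).
  { specialize (Hdle z0).
    assert (0 < RInt (fun y => Q y z0) a b).
    { apply (RInt_pos_pt _ a b y0); auto; intros; try apply CT_cont1; auto. }
    nra. }
  assert (Hmono := dec_fun phi dphi Hder Hdn).
  assert (Hp : forall z, phi (z + l) = phi z).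
  { intros z. unfold phi. apply RInt_ext. intros x Hx. rewrite Hmin, Hmax in Hx.
    apply Hper. lra. }
  assert (Hloc : locally z0 (fun t => phi z0 = phi t)).
  { exists (mkposreal l Hl). intros t Ht. change (Rabs (t - z0) < l) in Ht.
    apply Rabs_def2 in Ht.
    destruct (Rle_or_lt z0 t).
    - assert (phi t <= phi z0) by (apply Hmono; lra).
      assert (phi (z0 + l) <= phi t) by (apply Hmono; lra).
      rewrite Hp in *. lra.
    - assert (phi z0 <= phi t) by (apply Hmono; lra).
      assert (phi t <= phi (z0 - l)) by (apply Hmono; lra).
      pose proof (Hp (z0 - l)) as E. replace (z0 - l + l) with z0 in E by ring.
      lra. }
  assert (Hc : is_derive phi z0 0).
  { apply (is_derive_ext_loc (fun _ => phi z0)); auto. apply (is_derive_const (phi z0) z0). }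
  apply is_derive_unique in Hc. rewrite (is_derive_unique _ _ _ (Hder z0)) in Hc. lra.
Qed.

Lemma Rbound (A Uy Uz ur ui vr vi wr wi : R) :
  0 <= A -> sqrt (Uy^2 + Uz^2) <= A ->
  Rabs (ui*(vi*Uy + wi*Uz) + ur*(vr*Uy + wr*Uz)) <=
  A/2 * (ur^2+ui^2+vr^2+vi^2+wr^2+wi^2).
Proof.
  intros HA Hs.
  assert (HU : Uy^2 + Uz^2 <= A^2).
  { rewrite <- (sqrt_sqrt (Uy^2+Uz^2)) by nra.
    assert (0 <= sqrt (Uy^2+Uz^2)) by apply sqrt_pos. nra. }
  set (a1 := ur*vr + ui*vi). set (b1 := ur*wr + ui*wi).
  set (R0 := ui*(vi*Uy + wi*Uz) + ur*(vr*Uy + wr*Uz)).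
  assert (E : R0 = Uy*a1 + Uz*b1) by (unfold R0, a1, b1; ring).
  assert (C1 : R0^2 <= (Uy^2+Uz^2)*(a1^2+b1^2)).
  { rewrite E. assert (0 <= (Uy*b1 - Uz*a1)^2) by apply pow2_ge_0. nra. }
  assert (C2 : a1^2+b1^2 <= (vr^2+vi^2+wr^2+wi^2)*(ur^2+ui^2)).
  { unfold a1, b1. assert (0 <= (ur*vi - ui*vr)^2) by apply pow2_ge_0.
    assert (0 <= (ur*wi - ui*wr)^2) by apply pow2_ge_0. nra. }
  set (V2 := vr^2+vi^2+wr^2+wi^2). set (u2 := ur^2+ui^2).
  assert (HV : 0 <= V2) by (unfold V2; nra).
  assert (Hu : 0 <= u2) by (unfold u2; nra).
  assert (C3 : R0^2 <= A^2 * (V2*u2)).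
  { apply Rle_trans with ((Uy^2+Uz^2)*(a1^2+b1^2)); auto.
    apply Rle_trans with (A^2*(a1^2+b1^2)).
    apply Rmult_le_compat_r; [ |exact HU]. 
    assert (0<=a1^2) by apply pow2_ge_0. assert (0<=b1^2) by apply pow2_ge_0. lra.
    apply Rmult_le_compat_l. apply pow2_ge_0. exact C2. }
  assert (C4 : A^2*(V2*u2) <= (A/2*(u2+V2))^2).
  { assert (0 <= A^2*(u2-V2)^2) by (apply Rmult_le_pos; [nra| apply pow2_ge_0]). nra. }
  replace (ur^2+ui^2+vr^2+vi^2+wr^2+wi^2) with (u2+V2) by (unfold u2, V2; ring).
  assert (0 <= A/2*(u2+V2)) by nra.
  apply Rle_trans with (Rabs (A/2*(u2+V2))).
  apply Rsqr_le_abs_0. unfold Rsqr. pose proof (Rle_trans _ _ _ C3 C4) as C5. 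
  replace (R0*R0) with (R0^2) by ring. replace (A / 2 * (u2 + V2) * (A / 2 * (u2 + V2))) with ((A / 2 * (u2 + V2))^2) by ring. exact C5.
  rewrite Rabs_pos_eq by lra. unfold V2. lra.
Qed.

Lemma ident (k Ux Uy Uz cr ci ur ui vr vi wr wi pr pi pyr pyi pzr pzi vyr vyi wzr wzi : R) :
 k <> 0 ->
 (Ci * RtoC k * (RtoC Ux - (cr,ci)) * (ur,ui) + (vr,vi) * RtoC Uy + (wr,wi) * RtoC Uz
    = - (Ci * RtoC k * (pr,pi)))%C ->
 (Ci * RtoC k * (RtoC Ux - (cr,ci)) * (vr,vi) = - (pyr,pyi))%C ->
 (Ci * RtoC k * (RtoC Ux - (cr,ci)) * (wr,wi) = - (pzr,pzi))%C ->
 (Ci * RtoC k * (ur,ui) + (vyr,vyi) + (wzr,wzi) = RtoC 0)%C ->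
 (pyr*vr + pyi*vi + pr*vyr + pi*vyi) + (pzr*wr + pzi*wi + pr*wzr + pi*wzi)
 = - k*ci*(ur^2+ui^2+vr^2+vi^2+wr^2+wi^2)
   - (ui*(vi*Uy + wi*Uz) + ur*(vr*Uy + wr*Uz)).
Proof.
  intros Hk E1 E2 E3 E4.
  apply (f_equal fst) in E1 as E1r. apply (f_equal snd) in E1 as E1i.
  apply (f_equal fst) in E2 as E2r. apply (f_equal snd) in E2 as E2i.
  apply (f_equal fst) in E3 as E3r. apply (f_equal snd) in E3 as E3i.
  apply (f_equal fst) in E4 as E4r. apply (f_equal snd) in E4 as E4i.
  simpl in E1r, E1i, E2r, E2i, E3r, E3i, E4r, E4i. clear E1 E2 E3 E4.
  assert (Hpyr : pyr = -(k*ci*vr - k*(Ux-cr)*vi)) by lra.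
  assert (Hpyi : pyi = -(k*ci*vi + k*(Ux-cr)*vr)) by lra.
  assert (Hpzr : pzr = -(k*ci*wr - k*(Ux-cr)*wi)) by lra.
  assert (Hpzi : pzi = -(k*ci*wi + k*(Ux-cr)*wr)) by lra.
  assert (Hvyr : vyr = k*ui - wzr) by lra.
  assert (Hvyi : vyi = -k*ur - wzi) by lra.
  assert (Hpi : pi = (k*ci*ur - k*(Ux-cr)*ui + vr*Uy + wr*Uz)/k).
  { apply (Rmult_eq_reg_l k); [|exact Hk]. field_simplify; [|exact Hk]. lra. }
  assert (Hpr : pr = -(k*ci*ui + k*(Ux-cr)*ur + vi*Uy + wi*Uz)/k).
  { apply (Rmult_eq_reg_l k); [|exact Hk]. field_simplify; [|exact Hk]. lra. }
  rewrite Hpyr, Hpyi, Hpzr, Hpzi, Hvyr, Hvyi, Hpi, Hpr. field. exact Hk.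
Qed.

Lemma nonzero_Q (k Ux Uy Uz : R) (c u0 v0 w0 p0 : C) : k <> 0 ->
  (Ci * RtoC k * (RtoC Ux - c) * u0 + v0 * RtoC Uy + w0 * RtoC Uz
    = - (Ci * RtoC k * p0))%C ->
  (u0 <> RtoC 0 \/ v0 <> RtoC 0 \/ w0 <> RtoC 0 \/ p0 <> RtoC 0) ->
  0 < fst u0^2 + snd u0^2 + fst v0^2 + snd v0^2 + fst w0^2 + snd w0^2.
Proof.
  destruct c as [cr ci], u0 as [ur ui], v0 as [vr vi], w0 as [wr wi], p0 as [pr pi].
  simpl. intros Hk E Hd.
  destruct (Rlt_or_le 0 (ur^2+ui^2+vr^2+vi^2+wr^2+wi^2)) as [|Hle]; auto. exfalso.
  assert (ur = 0) by nra. assert (ui = 0) by nra. assert (vr = 0) by nra.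
  assert (vi = 0) by nra. assert (wr = 0) by nra. assert (wi = 0) by nra.
  subst.
  apply (f_equal fst) in E as Er. apply (f_equal snd) in E as Ei. simpl in Er, Ei.
  assert (k * pi = 0) by lra. assert (k * pr = 0) by lra.
  assert (pi = 0). { destruct (Rmult_integral _ _ H); [contradiction|auto]. }
  assert (pr = 0). { destruct (Rmult_integral _ _ H0); [contradiction|auto]. }
  subst. destruct Hd as [H'|[H'|[H'|H']]]; apply H'; reflexivity.
Qed.

Lemma dyC_eq (f fy : R->R->C) : (forall y z, is_derive (fun t => f t z) y (fy y z)) ->
  forall y z, dyC f y z = fy y z.
Proof.
  intros H y z. unfold dyC, Re, Im.
  assert (E1 : Derive (fun t => fst (f t z)) y = fst (fy y z)).
  { apply is_derive_unique. apply (is_derive_fstC (fun t => f t z)). apply H. }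
  assert (E2 : Derive (fun t => snd (f t z)) y = snd (fy y z)).
  { apply is_derive_unique. apply (is_derive_sndC (fun t => f t z)). apply H. }
  rewrite E1, E2. destruct (fy y z); reflexivity.
Qed.

Lemma dzC_eq (f fz : R->R->C) : (forall y z, is_derive (fun t => f y t) z (fz y z)) ->
  forall y z, dzC f y z = fz y z.
Proof.
  intros H y z. unfold dzC, Re, Im.
  assert (E1 : Derive (fun t => fst (f y t)) z = fst (fz y z)).
  { apply is_derive_unique. apply (is_derive_fstC (fun t => f y t)). apply H. }
  assert (E2 : Derive (fun t => snd (f y t)) z = snd (fz y z)).
  { apply is_derive_unique. apply (is_derive_sndC (fun t => f y t)). apply H. }
  rewrite E1, E2. destruct (fz y z); reflexivity.
Qed.

Lemma deriv_pair (f g : R -> C) (df dg : C) x s : is_derive f x df -> is_derive g x dg ->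
  is_derive (fun t => s*(fst (f t)*fst (g t) + snd (f t)*snd (g t))) x
   (s*(fst df * fst (g x) + snd df * snd (g x) + fst (f x)*fst dg + snd (f x)*snd dg)).
Proof.
  intros Hf Hg.
  pose proof (is_derive_mult _ _ x _ _ (is_derive_fstC _ _ _ Hf) (is_derive_fstC _ _ _ Hg) Rmult_comm) as M1.
  pose proof (is_derive_mult _ _ x _ _ (is_derive_sndC _ _ _ Hf) (is_derive_sndC _ _ _ Hg) Rmult_comm) as M2.
  pose proof (is_derive_plus _ _ x _ _ M1 M2) as M3.
  pose proof (is_derive_scal _ x s _ M3) as M4.
  replace (s*(fst df * fst (g x) + snd df * snd (g x) + fst (f x)*fst dg + snd (f x)*snd dg))
    with (s*((fst df * fst (g x) + fst (f x)*fst dg) + (snd df * snd (g x) + snd (f x)*snd dg))) by ring.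
  exact M4.
Qed.

Lemma CT_pow2 (f : R -> R -> R) : CT f -> CT (fun y z => f y z ^ 2).
Proof.
  intros H x y. apply continuity_2d_pt_ext with (fun y z => f y z * f y z).
  intros; ring. apply continuity_2d_pt_mult; apply H.
Qed.

Ltac ct := intros ? ?; repeat first [ apply continuity_2d_pt_plus | apply continuity_2d_pt_mult
  | apply continuity_2d_pt_const | apply CT_pow2; intros ? ? | apply cont2C_re; assumption
  | apply cont2C_im; assumption ].

Lemma fin (s k ci A Q R0 T1 T2 : R) : (s = 1 \/ s = -1) -> T1 + T2 = -k*ci*Q - R0 ->
  Rabs R0 <= A/2*Q -> s*k = Rabs k -> s*T1 + s*T2 <= -(Rabs k * ci - A/2)*Q.
Proof.
  intros Hs HT Hb Hsk. rewrite <- Hsk.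
  assert (R0 <= Rabs R0) by apply Rle_abs.
  assert (- R0 <= Rabs R0) by (rewrite <- Rabs_Ropp; apply Rle_abs).
  replace (s*T1 + s*T2) with (s*(T1+T2)) by ring. rewrite HT.
  destruct Hs; subst s.
  - replace (1 * (- k * ci * Q - R0)) with (-(1*k*ci - A/2)*Q - (A/2*Q + R0)) by ring.
    lra.
  - replace (-1 * (- k * ci * Q - R0)) with (-(-1*k*ci - A/2)*Q - (A/2*Q - R0)) by ring.
    lra.
Qed.

Lemma identC (k Ux Uy Uz : R) (c u0 v0 w0 p0 py0 pz0 vy0 wz0 : C) : k <> 0 ->
 (Ci * RtoC k * (RtoC Ux - c) * u0 + v0 * RtoC Uy + w0 * RtoC Uz
    = - (Ci * RtoC k * p0))%C ->
 (Ci * RtoC k * (RtoC Ux - c) * v0 = - py0)%C ->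
 (Ci * RtoC k * (RtoC Ux - c) * w0 = - pz0)%C ->
 (Ci * RtoC k * u0 + vy0 + wz0 = RtoC 0)%C ->
 (fst py0*fst v0 + snd py0*snd v0 + fst p0*fst vy0 + snd p0*snd vy0)
 + (fst pz0*fst w0 + snd pz0*snd w0 + fst p0*fst wz0 + snd p0*snd wz0)
 = - k*snd c*(fst u0^2+snd u0^2+fst v0^2+snd v0^2+fst w0^2+snd w0^2)
   - (snd u0*(snd v0*Uy + snd w0*Uz) + fst u0*(fst v0*Uy + fst w0*Uz)).
Proof.
  destruct c, u0, v0, w0, p0, py0, pz0, vy0, wz0. simpl. apply ident.
Qed.

Theorem theorem3 (a b l3 : R) (U : R -> R -> R) (A B k : R) (c : C)
    (u v w p : R -> R -> C) :
  a < b -> 0 < l3 ->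
  smooth2 U -> zperiodic a b l3 U ->
  (forall z, dy U a z = 0) -> (forall z, dy U b z = 0) ->
  is_max_strip a b (fun y z => sqrt (dy U y z ^ 2 + dz U y z ^ 2)) A ->
  is_max_strip a b (fun y z => Rabs (lap U y z)) B ->
  k <> 0 -> 0 < Im c ->
  smooth2 u -> smooth2 v -> smooth2 w -> smooth2 p ->
  zperiodic a b l3 u -> zperiodic a b l3 v ->
  zperiodic a b l3 w -> zperiodic a b l3 p ->
  (exists y z, a <= y <= b /\
     (u y z <> RtoC 0 \/ v y z <> RtoC 0 \/ w y z <> RtoC 0 \/ p y z <> RtoC 0)) ->
  (forall y z, a <= y <= b ->
     (Ci * RtoC k * (RtoC (U y z) - c) * u y z
        + v y z * RtoC (dy U y z) + w y z * RtoC (dz U y z)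
      = - (Ci * RtoC k * p y z))%C) ->
  (forall y z, a <= y <= b ->
     (Ci * RtoC k * (RtoC (U y z) - c) * v y z = - dyC p y z)%C) ->
  (forall y z, a <= y <= b ->
     (Ci * RtoC k * (RtoC (U y z) - c) * w y z = - dzC p y z)%C) ->
  (forall y z, a <= y <= b ->
     (Ci * RtoC k * u y z + dyC v y z + dzC w y z = RtoC 0)%C) ->
  (forall z, v a z = RtoC 0) -> (forall z, v b z = RtoC 0) ->
  (k * Im c) ^ 2 <= 2 * A ^ 2 + B * Im c.
Proof.
  intros Hab Hl _ _ _ _ [HA1 [yA [zA [_ HA2]]]] [_ [yB [zB [_ HB2]]]] Hk Hci
    Hsu Hsv Hsw Hsp _ _ Hperw Hperp Hnz E1 E2 E3 E4 Hva Hvb.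
  assert (HA : 0 <= A) by (rewrite <- HA2; apply sqrt_pos).
  assert (HB : 0 <= B) by (rewrite <- HB2; apply Rabs_pos).
  destruct (Hsu 1%nat) as [cu _].
  destruct (Hsv 1%nat) as [cv [vy [vz [Hvy [Hvz [[cvy _] [cvz _]]]]]]].
  destruct (Hsw 1%nat) as [cw [wy [wz [Hwy [Hwz [[cwy _] [cwz _]]]]]]].
  destruct (Hsp 1%nat) as [cp [py [pz [Hpy [Hpz [[cpy _] [cpz _]]]]]]].
  assert (Dpy := dyC_eq _ _ Hpy).
  assert (Dpz := dzC_eq _ _ Hpz).
  assert (Dvy := dyC_eq _ _ Hvy).
  assert (Dwz := dzC_eq _ _ Hwz).
  assert (Hs : exists s, s * k = Rabs k /\ (s = 1 \/ s = -1)).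
  { destruct (Rle_or_lt 0 k).
    - exists 1. rewrite Rabs_pos_eq by lra. split; [ring| auto].
    - exists (-1). rewrite Rabs_left by lra. split; [ring| auto]. }
  destruct Hs as [s [Hsk Hs]].
  set (K := Rabs k * Im c - A/2).
  assert (HK : K <= 0).
  { apply (core a b l3
     (fun y z => s * (fst (p y z) * fst (v y z) + snd (p y z) * snd (v y z)))
     (fun y z => s * (fst (py y z) * fst (v y z) + snd (py y z) * snd (v y z)
                      + fst (p y z) * fst (vy y z) + snd (p y z) * snd (vy y z)))
     (fun y z => s * (fst (p y z) * fst (w y z) + snd (p y z) * snd (w y z)))
     (fun y z => s * (fst (pz y z) * fst (w y z) + snd (pz y z) * snd (w y z)
                      + fst (p y z) * fst (wz y z) + snd (p y z) * snd (wz y z)))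
     (fun y z => fst (u y z)^2 + snd (u y z)^2 + fst (v y z)^2 + snd (v y z)^2
                 + fst (w y z)^2 + snd (w y z)^2)).
    - exact Hab.
    - exact Hl.
    - ct.
    - ct.
    - ct.
    - ct.
    - intros y z. apply (deriv_pair (fun t => p t z) (fun t => v t z) (py y z) (vy y z)).
      apply Hpy. apply Hvy.
    - intros y z. apply (deriv_pair (fun t => p y t) (fun t => w y t) (pz y z) (wz y z)).
      apply Hpz. apply Hwz.
    - intros z. rewrite Hva. simpl. ring.
    - intros z. rewrite Hvb. simpl. ring.
    - intros y z Hy. rewrite Hperp, Hperw by exact Hy. reflexivity.
    - intros y z Hy.
      pose proof (E2 y z Hy) as e2. rewrite Dpy in e2.
      pose proof (E3 y z Hy) as e3. rewrite Dpz in e3.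
      pose proof (E4 y z Hy) as e4. rewrite Dvy, Dwz in e4.
      pose proof (identC k (U y z) (dy U y z) (dz U y z) c (u y z) (v y z) (w y z)
        (p y z) (py y z) (pz y z) (vy y z) (wz y z) Hk (E1 y z Hy) e2 e3 e4) as Hid.
      pose proof (Rbound A (dy U y z) (dz U y z) (fst (u y z)) (snd (u y z))
        (fst (v y z)) (snd (v y z)) (fst (w y z)) (snd (w y z)) HA (HA1 y z Hy)) as Hb.
      unfold K. change (Im c) with (snd c).
      exact (fin s k (snd c) A _ _ _ _ Hs Hid Hb Hsk).
    - intros y z _.
      pose proof (pow2_ge_0 (fst (u y z))). pose proof (pow2_ge_0 (snd (u y z))).
      pose proof (pow2_ge_0 (fst (v y z))). pose proof (pow2_ge_0 (snd (v y z))).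
      pose proof (pow2_ge_0 (fst (w y z))). pose proof (pow2_ge_0 (snd (w y z))).
      lra.
    - destruct Hnz as [y [z [Hy Hd]]]. exists y, z. split; [exact Hy|].
      apply (nonzero_Q k (U y z) (dy U y z) (dz U y z) c (u y z) (v y z) (w y z) (p y z));
        auto. }
  unfold K in HK.
  assert (Hk2 : (k * Im c)^2 = (Rabs k * Im c)^2).
  { rewrite !Rpow_mult_distr. rewrite pow2_abs. reflexivity. }
  assert (0 <= Rabs k * Im c) by (apply Rmult_le_pos; [apply Rabs_pos| lra]).
  rewrite Hk2. nra.
Qed.
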